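(* Let $s$ be a non-empty string whose number $r$ of maximal runs is even. Then the only admissible bilateral run-peeling decomposition of $s$ that emits the minimum possible number of tokens is the one that, at every peeling step, takes $x=L$ and $y=R$ (i.e. peels both boundary runs completely, as Flashback does).
   Context: A maximal run of a string is a maximal block of consecutive equal symbols. An admissible bilateral run-peeling decomposition of a non-empty string $s$ is obtained by repeatedly applying the following rule to an active span (initially all of $s$) until it is consumed: (Termination) if the active span consists of a single run or of two adjacent runs, emit one terminal token for the span and stop; (Peeling step) otherwise, let $L$ be the length of the span's leading run (longest prefix of one repeated symbol) and $R$ the length of its trailing run (longest suffix of one repeated symbol), choose any integers $x\in\{1,\dots,L\}$ and $y\in\{1,\dots,R\}$, emit one token formed by the peeled prefix of length $x$ and the peeled suffix of length $y$, and continue with the remaining middle as the active span. *)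

(* Defs.v *)
From mathcomp Require Import all_boot.
Set Implicit Arguments. Unset Strict Implicit. Unset Printing Implicit Defensive.

Section RunPeeling.
Variable T : eqType.

Definition nruns (s : seq T) : nat :=
  if s is x :: t then (count id (pairmap (fun a b => a != b) x t)).+1 else 0.

Definition lead_run (s : seq T) : nat :=
  if s is x :: t then (find (predC1 x) t).+1 else 0.

Definition trail_run (s : seq T) : nat := lead_run (rev s).

Inductive token : Type :=
| Peel of seq T & seq T
| Term of seq T.

Definition peel_mid (x y : nat) (s : seq T) : seq T :=
  drop x (take (size s - y) s).

Inductive admissible : seq T -> seq token -> Prop :=
| adm_term s : s != [::] -> nruns s <= 2 -> admissible s [:: Term s]
| adm_peel s x y d :
    2 < nruns s ->
    0 < x <= lead_run s -> 0 < y <= trail_run s ->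
    admissible (peel_mid x y s) d ->
    admissible s (Peel (take x s) (drop (size s - y) s) :: d).

Inductive flashback : seq T -> seq token -> Prop :=
| fb_term s : s != [::] -> nruns s <= 2 -> flashback s [:: Term s]
| fb_peel s d :
    2 < nruns s ->
    flashback (peel_mid (lead_run s) (trail_run s) s) d ->
    flashback s (Peel (take (lead_run s) s)
                      (drop (size s - trail_run s) s) :: d).

Definition min_admissible (s : seq T) (d : seq token) : Prop :=
  admissible s d /\ forall d', admissible s d' -> size d <= size d'.

End RunPeeling.

(* Main.v *)
Require Import Defs.
From mathcomp Require Import all_boot.
From mathcomp Require Import zify.
Set Implicit Arguments.
Unset Strict Implicit.

Section Aux.
Variable T : eqType.
Implicit Types s t : seq T.

Lemma nruns_cons2 (a b : T) t :
  nruns (a :: b :: t) = (a != b) + nruns (b :: t).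
Proof. by rewrite /= addnS. Qed.

Lemma lead_cons2 (a b : T) t :
  lead_run (a :: b :: t) = if b == a then (lead_run (b :: t)).+1 else 1.
Proof.
rewrite /lead_run /=; case: (eqVneq b a) => [->|] //=.
Qed.

Lemma lead_pos s : s != [::] -> 0 < lead_run s.
Proof. by case: s. Qed.

Lemma lead_le_size s : lead_run s <= size s.
Proof. case: s => //= a t; by rewrite ltnS find_size. Qed.

Lemma nruns_drop s x : 0 < x <= lead_run s ->
  nruns (drop x s) = nruns s - (x == lead_run s).
Proof.
elim: s x => [|a t IH] x; first by rewrite /= sub0n.
case: t IH => [|b t] IH.
  by case: x => [|[|x]].
rewrite lead_cons2 nruns_cons2.
case: (eqVneq b a) => [eba|nba].
- subst b; rewrite ?eqxx /negb add0n.
  case: x => [|[|x]] Hx //.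
  + have -> : drop x.+2 [:: a, a & t] = drop x.+1 (a :: t) by [].
    by rewrite eqSS IH.
- case: x => [|[|x]] Hx //.
Qed.

Lemma lead_take s n : 0 < n -> lead_run (take n s) = minn n (lead_run s).
Proof.
elim: s n => [|a t IH] [|n] // _.
have -> : take n.+1 (a :: t) = a :: take n t by [].
case: t IH => [|b t] IH.
  by case: n.
case: n => [|m].
  rewrite take0; have := lead_pos (isT : a :: b :: t != [::]).
  by case: (lead_run [:: a, b & t]) => [|k] // _; apply/esym/minn_idPl.
have -> : take m.+1 (b :: t) = b :: take m t by [].
rewrite lead_cons2 lead_cons2.
case: (b == a) => //.
have := IH m.+1 isT.
have -> : take m.+1 (b :: t) = b :: take m t by [].
move=> ->.
by rewrite minnSS.
Qed.

Lemma nruns_rcons (a : T) t (b : T) :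
  nruns (rcons (a :: t) b) = nruns (a :: t) + (last a t != b).
Proof.
elim: t a => [|c t IH] a.
  by rewrite /= addnC.
rewrite !rcons_cons nruns_cons2 -rcons_cons IH nruns_cons2 addnA.
by [].
Qed.

Lemma nruns_rev s : nruns (rev s) = nruns s.
Proof.
elim: s => [|a t IH] //.
case: t IH => [|b t] IH; first by [].
rewrite rev_cons.
case E: (rev (b :: t)) => [|c u]; first by move: (f_equal size E); rewrite size_rev.
rewrite nruns_rcons -E IH nruns_cons2 addnC; congr (_ + _).
have -> : last c u = last a (rev (b :: t)) by rewrite E.
by rewrite rev_cons last_rcons eq_sym.
Qed.

Lemma nruns_nil : nruns ([::] : seq T) = 0. Proof. by []. Qed.

Lemma nruns_pos s : s != [::] -> 0 < nruns s.
Proof. by case: s. Qed.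

Lemma nruns_take s y : 0 < y <= trail_run s ->
  nruns (take (size s - y) s) = nruns s - (y == trail_run s).
Proof.
move=> Hy.
have -> : take (size s - y) s = rev (drop y (rev s)) by rewrite drop_rev revK.
by rewrite nruns_rev nruns_drop // nruns_rev.
Qed.

Lemma lead_lt_size s : 2 <= nruns s -> lead_run s < size s.
Proof.
move=> H; have:= lead_le_size s; rewrite leq_eqVlt => /orP [/eqP E|//].
have Hs : s != [::] by case: s H E.
have := @nruns_drop s (lead_run s); rewrite lead_pos // eqxx E drop_size.
move=> /(_ (leqnn _)) /=; lia.
Qed.

Lemma LR_lt s : 3 <= nruns s -> lead_run s + trail_run s < size s.
Proof.
move=> H.
have Hs : s != [::] by case: s H.
have HR : 0 < trail_run s by rewrite /trail_run lead_pos // -size_eq0 size_rev size_eq0.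
have E := @nruns_take s (trail_run s); rewrite HR eqxx leqnn in E.
have E' := E isT.
have H2 : 2 <= nruns (take (size s - trail_run s) s) by lia.
have Hl := lead_lt_size H2.
have Hsz : trail_run s <= size s by rewrite /trail_run -size_rev lead_le_size.
rewrite size_take in Hl.
have HRl : trail_run s < size s.
  rewrite /trail_run -size_rev; apply: lead_lt_size; rewrite nruns_rev; lia.
have Hn : 0 < size s - trail_run s by lia.
have Hc : size s - trail_run s < size s by lia.
rewrite Hc in Hl.
rewrite lead_take // in Hl.
move: Hl; rewrite /minn; case: ifP => ? ?; lia.
Qed.

Lemma nruns_peel s x y : 2 < nruns s ->
  0 < x <= lead_run s -> 0 < y <= trail_run s ->
  nruns (peel_mid x y s) = nruns s - (x == lead_run s) - (y == trail_run s).
Proof.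
move=> H Hx Hy.
have HLR := LR_lt H.
have Hlt : lead_run (take (size s - y) s) = lead_run s.
  rewrite lead_take; last by lia.
  apply/minn_idPr; lia.
rewrite /peel_mid nruns_drop; last by rewrite Hlt.
by rewrite Hlt nruns_take // subnAC.
Qed.

Lemma nruns_peel_ge s x y : 2 < nruns s ->
  0 < x <= lead_run s -> 0 < y <= trail_run s ->
  nruns s - 2 <= nruns (peel_mid x y s) /\
  (nruns (peel_mid x y s) = nruns s - 2 -> x = lead_run s /\ y = trail_run s).
Proof.
move=> H Hx Hy; rewrite nruns_peel //.
case: (eqVneq x (lead_run s)); case: (eqVneq y (trail_run s)) => /= ? ?;
  split; try lia; move=> E; lia.
Qed.

Lemma admA s d : admissible s d -> nruns s <= (size d).*2.
Proof.
elim=> {s d} [s _ H|s x y d H Hx Hy _ IH] /=; first by [].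
have [G _] := nruns_peel_ge H Hx Hy; lia.
Qed.

Lemma admB s d : admissible s d -> nruns s = (size d).*2 -> flashback s d.
Proof.
elim=> {s d} [s Hs H|s x y d H Hx Hy Ha IH] /= E; first exact: fb_term.
have [G1 G2] := nruns_peel_ge H Hx Hy.
have A := admA Ha.
have [ex ey] : x = lead_run s /\ y = trail_run s by apply: G2; lia.
subst x y; apply: fb_peel => //; apply: IH; lia.
Qed.

Lemma admE n s : size s <= n -> s != [::] -> ~~ odd (nruns s) ->
  exists d, admissible s d /\ nruns s = (size d).*2.
Proof.
elim: n s => [|n IH] s Hn Hs Ho; first by case: s Hn Hs Ho.
case: (leqP (nruns s) 2) => H.
  exists [:: Term s]; split; first exact: adm_term.
  have := nruns_pos Hs; move: Ho H; case: (nruns s) => [|[|[|k]]] //.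
have HL := lead_pos Hs.
have HR : 0 < trail_run s by rewrite /trail_run lead_pos // -size_eq0 size_rev size_eq0.
have Hx : 0 < lead_run s <= lead_run s by rewrite HL leqnn.
have Hy : 0 < trail_run s <= trail_run s by rewrite HR leqnn.
have E := nruns_peel H Hx Hy; rewrite !eqxx /= in E.
have Hm : peel_mid (lead_run s) (trail_run s) s != [::].
  apply/eqP => E0; rewrite E0 /= in E.
  lia.
have Hsz : size (peel_mid (lead_run s) (trail_run s) s) <= n.
  rewrite /peel_mid size_drop size_take.
  have := LR_lt H; case: ifP => _ ?; lia.
have Ho' : ~~ odd (nruns (peel_mid (lead_run s) (trail_run s) s)).
  have -> : nruns (peel_mid (lead_run s) (trail_run s) s) = nruns s - 2 by lia.
  by rewrite oddB ?addbF //; lia.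
have [d [Ha Hd]] := IH _ Hsz Hm Ho'.
exists (Peel (take (lead_run s) s) (drop (size s - trail_run s) s) :: d).
split; first exact: adm_peel.
rewrite /=; lia.
Qed.

End Aux.

Theorem corollary6p5 (T : eqType) (s : seq T) :
  s != [::] -> ~~ odd (nruns s) ->
  (exists d, flashback s d /\ min_admissible s d) /\
  (forall d, min_admissible s d -> flashback s d).
Proof.
move=> Hs Ho.
have [d0 [Ha0 E0]] := admE (leqnn (size s)) Hs Ho.
split.
  exists d0; split; first exact: admB.
  split => // d' Hd'; have := admA Hd'; lia.
move=> d [Ha Hmin].
apply: admB => //.
have := admA Ha; have := Hmin _ Ha0; lia.
Qed.
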